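(* Let $g=\prod_{i=1}^e g_i\in\mathbb{F}_2[X]$ with $g\mid X^n-1$, where $g_1,\dots,g_e$ are distinct irreducible polynomials, and for each $i$ let $\alpha_i$ be a root of $g_i$ in its splitting field. For $f\in\mathbb{F}_2[X]$ and $0\le i\le n-1$ set $\mathrm{LC}(i,f)=(\alpha_1^if(\alpha_1),\alpha_2^if(\alpha_2),\dots,\alpha_e^if(\alpha_e))$ and $\mathrm{LC}(f)=\{\mathrm{LC}(i,f):0\le i\le n-1\}$. Then for $f_1,f_2\in\mathbb{F}_2[X]$, $\mathrm{LC}(f_1)=\mathrm{LC}(f_2)$ if and only if $f_1(X)\equiv X^kf_2(X)\pmod{g(X)}$ for some integer $k\ge 0$.
   Context: $\mathrm{LC}(i,f)$ is the value of the linear combination, with coefficients given by the coefficients of $f$, of consecutive columns starting at column $i$ of the parity-check matrix whose $j$-th column is $(\alpha_1^j,\dots,\alpha_e^j)$ of the binary cyclic code generated by $g$. *)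

(* Defs.v *)
From HB Require Import structures.
From mathcomp Require Import all_boot all_order all_algebra all_field.
Set Implicit Arguments. Unset Strict Implicit. Unset Printing Implicit Defensive.
Import GRing.Theory.
Local Open Scope ring_scope.

Definition evalF2 (L : fieldExtType 'F_2) (f : {poly 'F_2}) (a : L) : L :=
  (map_poly (in_alg L) f).[a].

Definition LCi (L : fieldExtType 'F_2) (e : nat) (alpha : 'I_e -> L)
  (i : nat) (f : {poly 'F_2}) : 'rV[L]_e :=
  \row_(j < e) (alpha j ^+ i * evalF2 f (alpha j)).

(* LC(f) = { LC(i,f) : 0 <= i <= n-1 }, as a sequence used as a set *)
Definition LCset (L : fieldExtType 'F_2) (e : nat) (alpha : 'I_e -> L)
  (n : nat) (f : {poly 'F_2}) : seq 'rV[L]_e :=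
  [seq LCi alpha i f | i <- iota 0 n].

(* Main.v *)
Require Import Defs.
From HB Require Import structures.
From mathcomp Require Import all_boot all_order all_algebra all_field.
Import GRing.Theory.
Local Open Scope ring_scope.

Lemma F2_nz1 (x : 'F_2) : x != 0 -> x = 1.
Proof. move: x => [[|[|m]] Hm] //=. move=> _; exact/val_inj. Qed.

Lemma irr_monic (p : {poly 'F_2}) : irreducible_poly p -> p \is monic.
Proof.
move=> /irredp_neq0 Hp; rewrite monicE; apply/eqP/F2_nz1.
by rewrite lead_coef_eq0.
Qed.

Lemma irr_coprime (p q : {poly 'F_2}) :
  irreducible_poly p -> irreducible_poly q -> p != q -> coprimep p q.
Proof.
move=> hp hq hne; apply/coprimepP => d dp dq.
case: (irredp_XsubCP hp dp) => [//|dpP].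
case: (irredp_XsubCP hq dq) => [//|dqP].
have : p %= q by rewrite (eqp_ltrans dpP) in dqP.
by rewrite eqp_monic ?irr_monic // (negbTE hne).
Qed.

Section S.
Variable L : fieldExtType 'F_2.

Lemma EM (p q : {poly 'F_2}) (a : L) : evalF2 (p * q) a = evalF2 p a * evalF2 q a.
Proof. by rewrite /evalF2 rmorphM hornerM. Qed.
Lemma ED (p q : {poly 'F_2}) (a : L) : evalF2 (p + q) a = evalF2 p a + evalF2 q a.
Proof. by rewrite /evalF2 rmorphD hornerD. Qed.
Lemma EB (p q : {poly 'F_2}) (a : L) : evalF2 (p - q) a = evalF2 p a - evalF2 q a.
Proof. by rewrite /evalF2 rmorphB hornerD hornerN. Qed.
Lemma EX (k : nat) (a : L) : evalF2 'X^k a = a ^+ k.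
Proof. by rewrite /evalF2 map_polyXn hornerXn. Qed.
Lemma E1 (a : L) : evalF2 1 a = 1.
Proof. by rewrite /evalF2 rmorph1 hornerC. Qed.

Lemma root_dvd (q h : {poly 'F_2}) (a : L) :
  irreducible_poly q -> root (map_poly (in_alg L) q) a ->
  evalF2 h a = 0 -> q %| h.
Proof.
move=> hq hr hh; apply/negPn/negP => nd.
have cop : coprimep q h.
  apply/coprimepP => d dq dh.
  case: (irredp_XsubCP hq dq) => [//|dqP].
  by case/negP: nd; rewrite -(eqp_dvdl _ dqP).
case/Bezout_eq1_coprimepP: cop => [[u v]] /= Huv.
have := congr1 (fun p => evalF2 p a) Huv.
rewrite /= E1 ED !EM hh mulr0 addr0.
move/rootP: hr; rewrite /evalF2 => ->; rewrite mulr0 => /esym/eqP.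
by rewrite oner_eq0.
Qed.

Lemma root_of_dvd (q h : {poly 'F_2}) (a : L) :
  q %| h -> root (map_poly (in_alg L) q) a -> evalF2 h a = 0.
Proof.
move=> qh hr; apply/rootP; apply: root_dvdp hr.
by rewrite dvdp_map.
Qed.
End S.
Arguments root_of_dvd {L q h a}.
Arguments root_dvd {L q h a}.

Lemma prod_dvd e (gs : 'I_e -> {poly 'F_2}) (h : {poly 'F_2}) :
  (forall j, irreducible_poly (gs j)) ->
  (forall j k, gs j = gs k -> j = k) ->
  (forall j, gs j %| h) -> \prod_(j < e) gs j %| h.
Proof.
move=> hirr hdist hd.
rewrite -big_enum.
have : uniq (enum 'I_e) by apply: enum_uniq.
elim: (enum 'I_e) => [|a s IH] /=; first by rewrite big_nil dvd1p.
case/andP => nas us; rewrite big_cons Gauss_dvdp ?hd ?IH //.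
rewrite big_seq; apply: (big_ind (coprimep (gs a))).
- exact: coprimep1.
- by move=> x y hx hy; rewrite coprimepMr hx hy.
move=> i iS; apply: irr_coprime => //.
by apply/eqP => /hdist ai; rewrite ai iS in nas.
Qed.

Theorem lemma1 (L : fieldExtType 'F_2) (n e : nat) (gs : 'I_e -> {poly 'F_2})
  (alpha : 'I_e -> L)
  (hn : (0 < n)%N)
  (hirr : forall j, irreducible_poly (gs j))
  (hdist : forall j k, gs j = gs k -> j = k)
  (hdvd : (\prod_(j < e) gs j) %| ('X^n - 1))
  (hroot : forall j, root (map_poly (in_alg L) (gs j)) (alpha j))
  (f1 f2 : {poly 'F_2}) :
  (LCset alpha n f1 =i LCset alpha n f2) <->
  (exists k : nat, f1 %% (\prod_(j < e) gs j) = ('X^k * f2) %% (\prod_(j < e) gs j)).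
Proof.
set g := \prod_(j < e) gs j.
have gsg j : gs j %| g by rewrite /g (bigD1 j) //= dvdp_mulIl.
have an j : alpha j ^+ n = 1.
  have := root_of_dvd (dvdp_trans (gsg j) hdvd) (hroot j).
  by rewrite EB EX E1 => /eqP; rewrite subr_eq0 => /eqP.
have amod j m : alpha j ^+ m = alpha j ^+ (m %% n).
  by rewrite {1}(divn_eq m n) exprD mulnC exprM an expr1n mul1r.
have Key k : (forall j, evalF2 f1 (alpha j) = alpha j ^+ k * evalF2 f2 (alpha j))
    <-> f1 %% g = ('X^k * f2) %% g.
  split.
    move=> H.
    have : g %| f1 - 'X^k * f2.
      apply: prod_dvd => // j; apply: (root_dvd (hirr j) (hroot j)).
      by rewrite EB EM EX H subrr.
    move/modp_eq0P; rewrite modpD modpN => /eqP; rewrite subr_eq0 => /eqP //.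
  move=> H j.
  have : g %| f1 - 'X^k * f2 by apply/modp_eq0P; rewrite modpD modpN H subrr.
  move=> /(dvdp_trans (gsg j)) /root_of_dvd /(_ (hroot j)).
  by rewrite EB EM EX => /eqP; rewrite subr_eq0 => /eqP.
have Sub (h1 h2 : {poly 'F_2}) k :
    (forall j, evalF2 h1 (alpha j) = alpha j ^+ k * evalF2 h2 (alpha j)) ->
    {subset LCset alpha n h1 <= LCset alpha n h2}.
  move=> H x /mapP [i _ ->]; apply/mapP; exists ((i + k) %% n)%N.
    by rewrite mem_iota add0n ltn_pmod.
  by apply/rowP => j; rewrite !mxE H mulrA -exprD -amod.
split.
  move=> Heq.
  have : LCi alpha 0 f1 \in LCset alpha n f2.
    by rewrite -Heq; apply/mapP; exists 0%N => //; rewrite mem_iota.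
  case/mapP => i _ Hi; exists i; apply/Key => j.
  have := congr1 (fun M : 'rV_e => M 0 j) Hi.
  by rewrite /= !mxE expr0 mul1r.
case=> k /Key H x; apply/idP/idP; first exact: (Sub _ _ k).
apply: (Sub _ _ ((n.-1) * k)%N) => j.
rewrite H mulrA -exprD -mulSnr prednK // exprM an expr1n mul1r //.
Qed.
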